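(* Let $G$ be a connected, locally finite graph satisfying the Distinct Spheres Condition with respect to a vertex $u$. Then only finitely many vertices in the orbit of $u$ under the automorphism group $\mathrm{Aut}(G)$ are $\sim$-equivalent to $u$.
   Context: All graphs are simple with vertex set $V$; $d$ is graph distance, $B_x(r)=\{y: d(x,y)\le r\}$, $S_x(r)=\{y: d(x,y)=r\}$. $G$ satisfies the Distinct Spheres Condition with respect to $u$ if for all distinct vertices $x,y$ with $d(u,x)=d(u,y)$, $S_x(n)\ne S_y(n)$ for infinitely many $n\in\mathbb{N}$. The relation $\sim$ on $V$: $x\sim y$ iff there exists $n\in\mathbb{N}$ with $B_x(n)=B_y(n)$. *)

(* Defs.v *)
From Stdlib Require Import List Arith.
Set Implicit Arguments.

Section Graphs.
Variable V : Type.
Variable adj : V -> V -> Prop.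

Inductive walk : V -> V -> nat -> Prop :=
| walk_nil : forall x, walk x x 0
| walk_cons : forall x z y n, adj x z -> walk z y n -> walk x y (S n).

Definition simple_graph : Prop :=
  (forall x y, adj x y -> adj y x) /\ (forall x, ~ adj x x).

Definition connected : Prop := forall x y, exists n, walk x y n.

Definition locally_finite : Prop :=
  forall x, exists l : list V, forall y, adj x y -> In y l.

Definition dist (x y : V) (n : nat) : Prop :=
  walk x y n /\ forall m, walk x y m -> n <= m.

Definition ball (x : V) (r : nat) (y : V) : Prop :=
  exists m, m <= r /\ dist x y m.

Definition sphere (x : V) (r : nat) (y : V) : Prop := dist x y r.

Definition same_set (A B : V -> Prop) : Prop := forall z, A z <-> B z.

Definition distinct_spheres (u : V) : Prop :=
  forall x y, x <> y ->
    (exists k, dist u x k /\ dist u y k) ->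
    forall N, exists n, N <= n /\ ~ same_set (sphere x n) (sphere y n).

(* x ~ y iff B_x(n) = B_y(n) for some n *)
Definition ball_equiv (x y : V) : Prop :=
  exists n, same_set (ball x n) (ball y n).

Definition automorphism (f : V -> V) : Prop :=
  (exists g : V -> V, (forall x, g (f x) = x) /\ (forall y, f (g y) = y)) /\
  (forall x y, adj x y <-> adj (f x) (f y)).

Definition in_orbit (u v : V) : Prop := exists f, automorphism f /\ f u = v.

End Graphs.

(* Main.v *)
Require Import Defs.
From Stdlib Require Import List Arith Lia Classical.
Set Implicit Arguments.

Lemma walk_snoc V (adj : V -> V -> Prop) x y n z :
  walk adj x y n -> adj y z -> walk adj x z (S n).
Proof.
  induction 1; intros Hyz.
  - econstructor; [exact Hyz| constructor].
  - econstructor; [exact H| auto].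
Qed.

Lemma walk_unsnoc V (adj : V -> V -> Prop) n : forall x z,
  walk adj x z (S n) -> exists y, walk adj x y n /\ adj y z.
Proof.
  induction n; intros x z H; inversion H; subst.
  - inversion H4; subst. exists x. split; [constructor|auto].
  - destruct (IHn _ _ H4) as [y [Hw Ha]]. exists y. split; auto. econstructor; eauto.
Qed.

Lemma walk_rev V (adj : V -> V -> Prop) (Hs : simple_graph adj) x y n :
  walk adj x y n -> walk adj y x n.
Proof.
  induction 1. constructor. eapply walk_snoc; eauto. apply (proj1 Hs). auto.
Qed.

Lemma walk_min V (adj : V -> V -> Prop) x y n :
  walk adj x y n -> exists d, dist adj x y d.
Proof.
  induction n as [n IH] using lt_wf_ind. intros H.
  destruct (classic (exists m, m < n /\ walk adj x y m)) as [[m [Hm Hw]]|Hno].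
  - eapply IH; eauto.
  - exists n. split; auto. intros m Hw. destruct (le_lt_dec n m); auto.
    exfalso. apply Hno. eauto.
Qed.

Lemma ball_walk V (adj : V -> V -> Prop) x r z :
  ball adj x r z <-> exists m, m <= r /\ walk adj x z m.
Proof.
  split.
  - intros [m [Hm [Hw _]]]. eauto.
  - intros [m [Hm Hw]]. destruct (walk_min Hw) as [d Hd]. exists d. split; auto.
    pose proof (proj2 Hd m Hw). lia.
Qed.

Lemma ball_S V (adj : V -> V -> Prop) x r z :
  ball adj x (S r) z <-> ball adj x r z \/ exists w, ball adj x r w /\ adj w z.
Proof.
  rewrite !ball_walk. split.
  - intros [m [Hm Hw]]. destruct (le_lt_dec m r).
    + left. eauto.
    + assert (m = S r) by lia. subst. right.
      destruct (walk_unsnoc Hw) as [w [Hw' Ha]]. exists w. rewrite ball_walk. eauto.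
  - intros [[m [Hm Hw]]|[w [Hb Ha]]].
    + exists m. split; auto.
    + rewrite ball_walk in Hb. destruct Hb as [m [Hm Hw]]. exists (S m). split. lia.
      eapply walk_snoc; eauto.
Qed.

Lemma ball_prop V (adj : V -> V -> Prop) x y n :
  same_set (ball adj x n) (ball adj y n) ->
  forall k, same_set (ball adj x (k + n)) (ball adj y (k + n)).
Proof.
  intros H k. induction k. exact H.
  simpl. intros z. rewrite !ball_S. split.
  - intros [Hb|[w [Hb Ha]]]. left; apply IHk; auto. right; exists w; split; auto; apply IHk; auto.
  - intros [Hb|[w [Hb Ha]]]. left; apply IHk; auto. right; exists w; split; auto; apply IHk; auto.
Qed.

Lemma ball_prop' V (adj : V -> V -> Prop) x y n m :
  same_set (ball adj x n) (ball adj y n) -> n <= m ->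
  same_set (ball adj x m) (ball adj y m).
Proof.
  intros H Hm. replace m with ((m - n) + n) by lia. apply ball_prop; auto.
Qed.

Lemma sphere_ball V (adj : V -> V -> Prop) x m z :
  sphere adj x (S m) z <-> ball adj x (S m) z /\ ~ ball adj x m z.
Proof.
  unfold sphere. split.
  - intros Hd. split. exists (S m). split; auto.
    intros [k [Hk Hd']]. pose proof (proj2 Hd k (proj1 Hd')). lia.
  - intros [[k [Hk Hd]] Hn]. destruct (Nat.eq_dec k (S m)). subst; auto.
    exfalso. apply Hn. exists k. split; auto. lia.
Qed.

Lemma lemmaA V (adj : V -> V -> Prop) u (Hdsc : distinct_spheres adj u) x y k :
  x <> y -> ball_equiv adj x y -> dist adj u x k -> dist adj u y k -> False.
Proof.
  intros Hne [n Hn] Hx Hy.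
  destruct (Hdsc x y Hne (ex_intro _ k (conj Hx Hy)) (S n)) as [m [Hm Hs]].
  destruct m as [|m]. lia. apply Hs. intros z. rewrite !sphere_ball.
  pose proof (ball_prop' Hn (le_S_n _ _ Hm)) as H1.
  pose proof (ball_prop' Hn (le_S _ _ (le_S_n _ _ Hm))) as H2.
  rewrite (H1 z), (H2 z). tauto.
Qed.

Lemma auto_walk V (adj : V -> V -> Prop) f (Hf : automorphism adj f) x y n :
  walk adj x y n -> walk adj (f x) (f y) n.
Proof.
  induction 1. constructor. apply walk_cons with (f z); [exact (proj1 (proj2 Hf _ _) H) | exact IHwalk].
Qed.

Lemma inv_auto V (adj : V -> V -> Prop) f g (Hf : automorphism adj f) :
  (forall x, g (f x) = x) -> (forall y, f (g y) = y) -> automorphism adj g.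
Proof.
  intros H1 H2. split. exists f; auto.
  intros a b. rewrite (proj2 Hf (g a) (g b)), !H2. tauto.
Qed.

Lemma auto_walk_iff V (adj : V -> V -> Prop) f (Hf : automorphism adj f) x y n :
  walk adj (f x) (f y) n <-> walk adj x y n.
Proof.
  split; [|apply auto_walk; auto].
  destruct (proj1 Hf) as [g [H1 H2]]. intros Hw.
  rewrite <- (H1 x), <- (H1 y). apply auto_walk; auto. eapply inv_auto; eauto.
Qed.

Lemma auto_dist V (adj : V -> V -> Prop) f (Hf : automorphism adj f) x y n :
  dist adj (f x) (f y) n <-> dist adj x y n.
Proof.
  unfold dist. split; intros [Hw Hm]; split.
  - apply (auto_walk_iff Hf); auto.
  - intros m Hw'. apply Hm. apply (auto_walk_iff Hf); auto.
  - apply (auto_walk_iff Hf); auto.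
  - intros m Hw'. apply Hm. apply (auto_walk_iff Hf); auto.
Qed.

Lemma auto_ball V (adj : V -> V -> Prop) f (Hf : automorphism adj f) x r z :
  ball adj (f x) r (f z) <-> ball adj x r z.
Proof.
  unfold ball. split; intros [m [Hm Hd]]; exists m; split; auto;
  apply (auto_dist Hf); auto.
Qed.

Lemma auto_equiv V (adj : V -> V -> Prop) f (Hf : automorphism adj f) x y :
  ball_equiv adj x y -> ball_equiv adj (f x) (f y).
Proof.
  intros [n Hn]. exists n. destruct (proj1 Hf) as [g [H1 H2]].
  intros z. rewrite <- (H2 z), !(auto_ball Hf). apply Hn.
Qed.

Lemma nbrs_list V (adj : V -> V -> Prop) (Hlf : locally_finite adj) (l : list V) :
  exists l', forall w z, In w l -> adj w z -> In z l'.
Proof.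
  induction l as [|a l IH]. exists nil. intros w z [].
  destruct IH as [l' Hl']. destruct (Hlf a) as [la Hla].
  exists (la ++ l'). intros w z [<-|Hw] Ha; apply in_or_app; eauto.
Qed.

Lemma ball_finite V (adj : V -> V -> Prop) (Hlf : locally_finite adj) x n :
  exists l, forall z, ball adj x n z -> In z l.
Proof.
  induction n.
  - exists (x :: nil). intros z Hz. rewrite ball_walk in Hz.
    destruct Hz as [m [Hm Hw]]. assert (m = 0) by lia. subst. inversion Hw. left; auto.
  - destruct IHn as [l Hl]. destruct (nbrs_list Hlf l) as [l' Hl'].
    exists (l ++ l'). intros z Hz. apply ball_S in Hz. apply in_or_app.
    destruct Hz as [Hz|[w [Hw Ha]]]; eauto.
Qed.

Theorem mainTheorem6 (V : Type) (adj : V -> V -> Prop) (u : V)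
  (Hsimple : simple_graph adj)
  (Hconn : connected adj)
  (Hlf : locally_finite adj)
  (Hdsc : distinct_spheres adj u) :
  exists l : list V, forall v, in_orbit adj u v -> ball_equiv adj u v -> In v l.
Proof.
  destruct (classic (exists v, v <> u /\ in_orbit adj u v /\ ball_equiv adj u v))
    as [[v [Hvu [_ [n Hn]]]]|Hno].
  - destruct (ball_finite Hlf u n) as [l Hl]. exists l.
    intros x [g [Hg Hgx]] _. apply Hl. apply NNPP. intros Hnb.
    destruct (Hconn u x) as [m0 Hw0]. destruct (walk_min Hw0) as [k Hk].
    assert (n < k).
    { destruct (le_lt_dec k n); auto. exfalso. apply Hnb. exists k. auto. }
    destruct k as [|k]. lia.
    assert (Hvx : dist adj v x (S k)).
    { change (sphere adj v (S k) x). rewrite sphere_ball.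
      change (sphere adj u (S k) x) in Hk. rewrite sphere_ball in Hk.
      rewrite <- (ball_prop' Hn (le_S _ _ (le_S_n _ _ H)) x).
      rewrite <- (ball_prop' Hn (le_S_n _ _ H) x). auto. }
    destruct (proj1 Hg) as [h [H1 H2]].
    assert (Hh : automorphism adj h) by (eapply inv_auto; eauto).
    assert (Hdu : dist adj u (h u) (S k)).
    { rewrite <- (H1 u) at 1. rewrite Hgx. apply (auto_dist Hh).
      destruct Hk as [Hw Hm]. split. apply walk_rev; auto.
      intros m' Hw'. apply Hm. apply walk_rev; auto. }
    assert (Hdv : dist adj u (h v) (S k)).
    { rewrite <- (H1 u) at 1. rewrite Hgx. apply (auto_dist Hh).
      destruct Hvx as [Hw Hm]. split. apply walk_rev; auto.
      intros m' Hw'. apply Hm. apply walk_rev; auto. }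
    apply (lemmaA Hdsc (x := h u) (y := h v) (k := S k)); auto.
    + intros E. apply Hvu. rewrite <- (H2 u), <- (H2 v), E. auto.
    + apply auto_equiv; auto. exists n; auto.
  - exists (u :: nil). intros v Ho He. destruct (classic (v = u)) as [->|Hne].
    left; auto. exfalso. apply Hno. eauto.
Qed.
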